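(* Under the hypotheses of the preceding limit theorem (iid $X_i$ with continuous $F\in\mathcal{D}(G)$, norming constants $a_n,b_n$, $j(n)/n\to\lambda_1>0$, $k(n)/n\to\lambda_2>\lambda_1$, $\beta_i=\lambda_i/(\lambda_2-\lambda_1)$), for all real $u<y$ with $G(u)<1$, \[ \lim_{n\to\infty}\Pr\left(\frac{X_k-b_n}{a_n}\le y\ \Big|\ \frac{X_j-b_n}{a_n}>u,\ X_j\text{ and }X_k\text{ are records}\right) =\frac{G(y)^{\lambda_2}-G(u)^{\lambda_1}\left(\beta_2G(y)^{\lambda_2-\lambda_1}-\beta_1G(u)^{\lambda_2-\lambda_1}\right)}{\beta_2\left(1-G(u)^{\lambda_1}\right)-\beta_1\left(1-G(u)^{\lambda_2}\right)}. \]
   Context: $X_m$ is a record if $X_m>\max(X_1,\dots,X_{m-1})$; $X_1$ is always a record. $F\in\mathcal{D}(G)$ means $F^n(a_nx+b_n)\to G(x)$ for all $x$, with $G$ a non-degenerate extreme value distribution function. *)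

(* Defs.v *)
From Stdlib Require Import Reals.
Open Scope R_scope.

Definition is_sigma_algebra {Omega : Type} (M : (Omega -> Prop) -> Prop) : Prop :=
  M (fun _ => True) /\
  (forall A, M A -> M (fun w => ~ A w)) /\
  (forall A : nat -> Omega -> Prop, (forall n, M (A n)) -> M (fun w => exists n, A n w)).

Definition is_probability {Omega : Type} (M : (Omega -> Prop) -> Prop)
  (P : (Omega -> Prop) -> R) : Prop :=
  is_sigma_algebra M /\
  P (fun _ => True) = 1 /\
  (forall A, M A -> 0 <= P A) /\
  (forall A : nat -> Omega -> Prop,
      (forall n, M (A n)) ->
      (forall m n w, m <> n -> A m w -> A n w -> False) ->
      infinite_sum (fun n => P (A n)) (P (fun w => exists n, A n w))).

Fixpoint prodR (n : nat) (f : nat -> R) : R :=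
  match n with
  | O => 1
  | S m => prodR m f * f (S m)
  end.

(* X_1, X_2, ... (index 0 unused) are random variables, i.i.d. with common
   distribution function F: all finite-dimensional joint distribution
   functions of (X_1,...,X_n) factor as products of F. *)
Definition iid_with_cdf {Omega : Type} (M : (Omega -> Prop) -> Prop)
  (P : (Omega -> Prop) -> R) (X : nat -> Omega -> R) (F : R -> R) : Prop :=
  (forall i x, M (fun w => X i w <= x)) /\
  (forall (n : nat) (x : nat -> R),
      P (fun w => forall i, (1 <= i <= n)%nat -> X i w <= x i)
      = prodR n (fun i => F (x i))).

Definition is_record {Omega : Type} (X : nat -> Omega -> R) (m : nat) (w : Omega) : Prop :=
  forall i, (1 <= i < m)%nat -> X i w < X m w.

Definition gev_std (g z : R) : R :=
  if Req_EM_T g 0 then exp (- exp (- z))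
  else if Rlt_dec 0 (1 + g * z) then exp (- Rpower (1 + g * z) (- / g))
  else if Rlt_dec 0 g then 0 else 1.

Definition is_extreme_value_df (G : R -> R) : Prop :=
  exists g mu sigma, 0 < sigma /\ forall x, G x = gev_std g ((x - mu) / sigma).

Definition in_domain_of_attraction (F G : R -> R) (a b : nat -> R) : Prop :=
  is_extreme_value_df G /\ (forall n, 0 < a n) /\
  forall x, Un_cv (fun n => (F (a n * x + b n)) ^ n) (G x).

(* x^y for x >= 0, y > 0, with 0^y = 0 *)
Definition rpow (x y : R) : R := if Rlt_dec 0 x then Rpower x y else 0.

(* Main.v *)
Require Import Defs.
From Stdlib Require Import Reals Lra Lia Arith ZArith FunctionalExtensionality PropExtensionality Classical.
Open Scope R_scope.

Lemma dmul f g x a b : derivable_pt_lim f x a -> derivable_pt_lim g x b ->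
  derivable_pt_lim (fun y => f y * g y) x (a * g x + f x * b).
Proof. intros; exact (derivable_pt_lim_mult f g x a b H H0). Qed.
Lemma dsub f g x a b : derivable_pt_lim f x a -> derivable_pt_lim g x b ->
  derivable_pt_lim (fun y => f y - g y) x (a - b).
Proof. intros; exact (derivable_pt_lim_minus f g x a b H H0). Qed.
Lemma dconst c x : derivable_pt_lim (fun _ => c) x 0.
Proof. exact (derivable_pt_lim_const c x). Qed.
Lemma dscal c f x a : derivable_pt_lim f x a -> derivable_pt_lim (fun y => f y * c) x (a * c).
Proof. intro h. replace (a * c) with (a * (fun _ => c) x + f x * 0) by ring. apply dmul; auto. apply dconst. Qed.
Lemma dpow n x : derivable_pt_lim (fun y => y ^ n) x (INR n * x ^ pred n).
Proof. apply derivable_pt_lim_pow. Qed.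
Lemma dext f x a b : a = b -> derivable_pt_lim f x a -> derivable_pt_lim f x b.
Proof. intros ->; auto. Qed.

Lemma mvt_bounds f g a b : a <= b -> (forall c, a <= c <= b -> derivable_pt_lim f c (g c)) ->
  (forall x y, a <= x -> x <= y -> y <= b -> g x <= g y) ->
  (b - a) * g a <= f b - f a <= (b - a) * g b.
Proof.
  intros hab hd hg. destruct (Req_dec a b) as [<-|hne]. rewrite !Rminus_diag; lra.
  destruct (MVT_cor2 f g a b) as [c [hc1 hc2]]; [lra|auto|].
  rewrite hc1. assert (g a <= g c) by (apply hg; lra). assert (g c <= g b) by (apply hg; lra). nra.
Qed.

Fixpoint sumR (t : nat) (f : nat -> R) : R :=
  match t with O => 0 | S t => sumR t f + f t end.

Lemma pow_le_1 x n : 0 <= x <= 1 -> x ^ n <= 1.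
Proof. intro h; induction n; simpl; [lra|]. pose proof (pow_le x n (proj1 h)). nra. Qed.

Section Alg.
Variables J d : nat.
Variables U h : R.
Hypothesis HU : 0 <= U.
Hypothesis Hh : 0 <= h.

Definition pp (s : nat) := U + INR s * h.
Definition Gf (x : R) := (x ^ S J - U ^ S J) / INR (S J).
Definition Df (x : R) := (x ^ S d * Gf x - (x ^ (S J + S d) - U ^ (S J + S d)) / INR (S J + S d)) / INR (S d).

Lemma Gf_deriv x : derivable_pt_lim Gf x (x ^ J).
Proof.
  unfold Gf. unfold Rdiv. apply (dext _ _ ((INR (S J) * x ^ pred (S J) - 0) * / INR (S J))).
  simpl pred. field. apply not_0_INR; lia.
  apply dscal, dsub. apply dpow. apply dconst.
Qed.

Lemma Df_deriv x : derivable_pt_lim Df x (x ^ d * Gf x).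
Proof.
  unfold Df. unfold Rdiv at 1. 
  apply (dext _ _ (((INR (S d) * x ^ pred (S d)) * Gf x + x ^ S d * x ^ J
           - (INR (S J + S d) * x ^ pred (S J + S d) - 0) / INR (S J + S d)) * / INR (S d))).
  - replace (pred (S J + S d)) with (S d + J)%nat by lia. rewrite pow_add. simpl pred.
    field. split; apply not_0_INR; lia.
  - apply dscal, dsub.
    + apply dmul. apply dpow. apply Gf_deriv.
    + unfold Rdiv. apply dscal, dsub. apply dpow. apply dconst.
Qed.

Lemma Gf_U : Gf U = 0.
Proof. unfold Gf. rewrite Rminus_diag. unfold Rdiv; ring. Qed.
Lemma Df_U : Df U = 0.
Proof. unfold Df. rewrite Gf_U, Rminus_diag. unfold Rdiv; ring. Qed.

Lemma Gf_mono x y : U <= x -> x <= y -> Gf x <= Gf y.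
Proof.
  intros h1 h2. unfold Gf, Rdiv. apply Rmult_le_compat_r.
  left; apply Rinv_0_lt_compat, lt_0_INR; lia.
  pose proof (pow_incr x y (S J) ltac:(lra)). lra.
Qed.
Lemma Gf_nonneg x : U <= x -> 0 <= Gf x.
Proof. intro; rewrite <- Gf_U; apply Gf_mono; lra. Qed.

Lemma Gf_step x y : U <= x -> x <= y -> (y - x) * x ^ J <= Gf y - Gf x <= (y - x) * y ^ J.
Proof.
  intros h1 h2. apply (mvt_bounds Gf (fun z => z ^ J)); auto. intros; apply Gf_deriv.
  intros a b ha hb _. apply pow_incr; lra.
Qed.
Lemma Df_step x y : U <= x -> x <= y -> (y - x) * (x ^ d * Gf x) <= Df y - Df x <= (y - x) * (y ^ d * Gf y).
Proof.
  intros h1 h2. apply (mvt_bounds Df (fun z => z ^ d * Gf z)); auto. intros; apply Df_deriv.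
  intros a b ha hb _. apply Rmult_le_compat. apply pow_le; lra. apply Gf_nonneg; lra.
  apply pow_incr; lra. apply Gf_mono; lra.
Qed.

Definition Lw (s : nat) := sumR s (fun r => h * pp r ^ J).
Definition Up (s : nat) := sumR s (fun r => h * pp (S r) ^ J).
Definition lowerS (t : nat) := sumR t (fun s => h * (pp s ^ d * Lw s)).
Definition upperS (t : nat) := sumR t (fun s => h * (pp (S s) ^ d * Up (S s))).

Lemma pp_S s : pp (S s) - pp s = h.
Proof. unfold pp; rewrite S_INR; ring. Qed.
Lemma pp_ge s : U <= pp s.
Proof. unfold pp. pose proof (pos_INR s). nra. Qed.
Lemma pp_mono s t : (s <= t)%nat -> pp s <= pp t.
Proof. intro; unfold pp. apply le_INR in H. nra. Qed.

Lemma G_bounds t : Lw t <= Gf (pp t) <= Up t.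
Proof.
  induction t.
  - unfold Lw, Up, pp; simpl. rewrite Rmult_0_l, Rplus_0_r, Gf_U. lra.
  - unfold Lw, Up in *; simpl sumR.
    pose proof (Gf_step (pp t) (pp (S t)) (pp_ge t) (pp_mono t (S t) ltac:(lia))). rewrite pp_S in H. lra.
Qed.

Lemma D_bounds t : lowerS t <= Df (pp t) <= upperS t.
Proof.
  induction t.
  - unfold lowerS, upperS, pp; simpl. rewrite Rmult_0_l, Rplus_0_r, Df_U. lra.
  - unfold lowerS, upperS in *; simpl sumR.
    pose proof (Df_step (pp t) (pp (S t)) (pp_ge t) (pp_mono t (S t) ltac:(lia))). rewrite pp_S in H.
    pose proof (G_bounds t). pose proof (G_bounds (S t)).
    assert (0 <= pp t ^ d) by (apply pow_le; pose proof (pp_ge t); lra).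
    assert (0 <= pp (S t) ^ d) by (apply pow_le; pose proof (pp_ge (S t)); lra).
    split.
    + assert (h * (pp t ^ d * Lw t) <= h * (pp t ^ d * Gf (pp t))).
      { apply Rmult_le_compat_l; auto. apply Rmult_le_compat_l; lra. }
      lra.
    + assert (h * (pp (S t) ^ d * Gf (pp (S t))) <= h * (pp (S t) ^ d * Up (S t))).
      { apply Rmult_le_compat_l; auto. apply Rmult_le_compat_l; lra. }
      lra.
Qed.

Lemma Up_Lw s : Up s - Lw s = h * (pp s ^ J - pp 0 ^ J).
Proof.
  induction s. unfold Up, Lw; simpl; ring.
  unfold Up, Lw in *; simpl sumR. rewrite <- Rminus_0_r at 1.
  replace (sumR s (fun r => h * pp (S r) ^ J) + h * pp (S s) ^ J - (sumR s (fun r => h * pp r ^ J) + h * pp s ^ J))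
    with ((sumR s (fun r => h * pp (S r) ^ J) - sumR s (fun r => h * pp r ^ J)) + h * (pp (S s) ^ J - pp s ^ J)) by ring.
  rewrite IHs. ring.
Qed.

Variable m : nat.
Hypothesis Hm : pp m <= 1.

Lemma pp_01 s : (s <= m)%nat -> 0 <= pp s <= 1.
Proof. intro; split. pose proof (pp_ge s); lra. pose proof (pp_mono s m H); lra. Qed.

Lemma gap t : (t <= m)%nat -> upperS t - lowerS t <= 2 * INR t * h * h + h * (pp t ^ d - pp 0 ^ d).
Proof.
  induction t; intro ht.
  - unfold upperS, lowerS; simpl. lra.
  - specialize (IHt ltac:(lia)). unfold upperS, lowerS in *; simpl sumR. rewrite S_INR.
    pose proof (Up_Lw t) as E1. unfold Up at 1 in E1. 
    assert (EU : Up (S t) = Up t + h * pp (S t) ^ J) by reflexivity.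
    pose proof (pp_01 t ltac:(lia)). pose proof (pp_01 (S t) ltac:(lia)). pose proof (pp_01 0 ltac:(lia)).
    assert (a1 : pp t ^ J <= 1) by (apply pow_le_1; lra).
    assert (a2 : pp (S t) ^ J <= 1) by (apply pow_le_1; lra).
    assert (a3 : 0 <= pp 0 ^ J) by (apply pow_le; lra).
    assert (a4 : 0 <= pp (S t) ^ J) by (apply pow_le; lra).
    assert (hUL : Up (S t) - Lw t <= 2 * h).
    { rewrite EU. pose proof (Up_Lw t). nra. }
    assert (hG1 : Gf (pp t) <= 1).
    { unfold Gf. assert (1 <= INR (S J)) by (apply (le_INR 1); lia).
      assert (pp t ^ S J <= 1) by (apply pow_le_1; lra).
      pose proof (pow_le U (S J) HU). pose proof (pow_incr U (pp t) (S J) ltac:(pose proof (pp_ge t); lra)).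
      apply (Rmult_le_reg_r (INR (S J))). lra. unfold Rdiv; rewrite Rmult_assoc, Rinv_l by lra. nra. }
    pose proof (G_bounds t).
    assert (hL0 : 0 <= Lw t).
    { unfold Lw. clear -Hh HU. induction t; simpl. lra. pose proof (pow_le (pp t) J). 
      assert (0 <= pp t) by (pose proof (pp_ge t); lra). specialize (H H0). nra. }
    assert (b1 : 0 <= pp t ^ d) by (apply pow_le; lra).
    assert (b2 : pp (S t) ^ d <= 1) by (apply pow_le_1; lra).
    assert (b3 : pp t ^ d <= pp (S t) ^ d) by (apply pow_incr; pose proof (pp_mono t (S t) ltac:(lia)); lra).
    assert (key : h * (pp (S t) ^ d * Up (S t)) - h * (pp t ^ d * Lw t) <= h * (2 * h) + h * (pp (S t) ^ d - pp t ^ d)).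
    { replace (h * (pp (S t) ^ d * Up (S t)) - h * (pp t ^ d * Lw t)) with
        (h * (pp (S t) ^ d * (Up (S t) - Lw t)) + h * ((pp (S t) ^ d - pp t ^ d) * Lw t)) by ring.
      assert (pp (S t) ^ d * (Up (S t) - Lw t) <= 2 * h).
      { pose proof (G_bounds (S t)). pose proof (Gf_mono (pp t) (pp (S t)) (pp_ge t) (pp_mono t (S t) ltac:(lia))).
        assert (0 <= Up (S t) - Lw t) by lra. 
        assert (0 <= pp (S t) ^ d) by lra. nra. }
      assert ((pp (S t) ^ d - pp t ^ d) * Lw t <= pp (S t) ^ d - pp t ^ d) by nra.
      nra. }
    lra.
Qed.

End Alg.

Lemma Pext {Omega : Type} (A B : Omega -> Prop) : (forall w, A w <-> B w) -> A = B.
Proof. intro H; apply functional_extensionality; intro w; apply propositional_extensionality; auto. Qed.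


Lemma dense_q x y : x < y -> exists a b c : nat, x < (INR a - INR b) / INR (S c) < y.
Proof.
  intro hxy.
  destruct (archimed_cor1 (y - x)) as [N [hN hN0]]; [lra|].
  destruct N as [|c]; [lia|].
  set (r := x * INR (S c)). destruct (archimed r) as [h1 h2].
  set (z := up r) in *.
  exists (Z.to_nat z), (Z.to_nat (- z)), c.
  assert (hz : INR (Z.to_nat z) - INR (Z.to_nat (- z)) = IZR z).
  { rewrite !INR_IZR_INZ, <- minus_IZR. f_equal. lia. }
  rewrite hz. assert (hc : 0 < INR (S c)) by (apply lt_0_INR; lia).
  split.
  - apply (Rmult_lt_reg_r (INR (S c))); auto. unfold Rdiv; rewrite Rmult_assoc, Rinv_l by lra. unfold r in *; lra.
  - apply (Rmult_lt_reg_r (INR (S c))); auto. unfold Rdiv; rewrite Rmult_assoc, Rinv_l by lra.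
    assert (/ INR (S c) * INR (S c) = 1) by (field; lra).
    assert ((y - x) * INR (S c) > 1).
    { apply (Rmult_lt_reg_r (/ INR (S c))). apply Rinv_0_lt_compat; auto.
      rewrite Rmult_assoc, Rinv_r by lra. lra. }
    unfold r in *; nra.
Qed.


Lemma prodR_ext n f g : (forall i, (1 <= i <= n)%nat -> f i = g i) -> prodR n f = prodR n g.
Proof. induction n; intro h; simpl; auto. rewrite IHn, (h (S n)); [auto|lia|]. intros; apply h; lia. Qed.
Lemma prodR_add m t f : prodR (m + t) f = prodR m f * prodR t (fun i => f (m + i)%nat).
Proof. induction t; simpl. rewrite Nat.add_0_r; ring. rewrite Nat.add_succ_r; simpl; rewrite IHt; ring. Qed.
Lemma prodR_const t c : prodR t (fun _ => c) = c ^ t.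
Proof. induction t; simpl; auto. rewrite IHt; ring. Qed.


Section Main.
Variable Omega : Type.
Variable M : (Omega -> Prop) -> Prop.
Variable P : (Omega -> Prop) -> R.
Hypothesis HP : is_probability M P.

Lemma M_True : M (fun _ => True).
Proof. destruct HP as [[h _] _]; exact h. Qed.
Lemma M_not A : M A -> M (fun w => ~ A w).
Proof. destruct HP as [[_ [h _]] _]; apply h. Qed.
Lemma M_ex (A : nat -> Omega -> Prop) : (forall n, M (A n)) -> M (fun w => exists n, A n w).
Proof. destruct HP as [[_ [_ h]] _]; apply h. Qed.
Lemma M_ext A B : (forall w, A w <-> B w) -> M A -> M B.
Proof. intros H; rewrite (Pext A B H); auto. Qed.
Lemma M_False : M (fun _ => False).
Proof. apply (M_ext (fun w => ~ True)). tauto. apply M_not, M_True. Qed.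
Lemma M_or A B : M A -> M B -> M (fun w => A w \/ B w).
Proof.
  intros hA hB. apply (M_ext (fun w => exists n, (if Nat.eqb n 0 then A else B) w)).
  - intro w; split. intros [n Hn]; destruct (Nat.eqb n 0); auto.
    intros [h|h]. exists 0%nat; auto. exists 1%nat; auto.
  - apply M_ex; intro n; destruct (Nat.eqb n 0); auto.
Qed.
Lemma M_and A B : M A -> M B -> M (fun w => A w /\ B w).
Proof.
  intros hA hB. apply (M_ext (fun w => ~ (~ A w \/ ~ B w))).
  - intro w; tauto.
  - apply M_not, M_or; apply M_not; auto.
Qed.
Lemma M_forall_range (A : nat -> Omega -> Prop) lo hi :
  (forall i, M (A i)) -> M (fun w => forall i, (lo <= i < hi)%nat -> A i w).
Proof.
  intro hA. induction hi.
  - apply (M_ext (fun _ => True)). intro w; split; auto; intros _ i Hi; lia. apply M_True.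
  - apply (M_ext (fun w => (forall i, (lo <= i < hi)%nat -> A i w) /\ (~ (lo <= hi)%nat \/ A hi w))).
    + intro w; split.
      * intros [h1 h2] i Hi. destruct (Nat.eq_dec i hi). subst; destruct h2; auto; lia. apply h1; lia.
      * intros h; split. intros; apply h; lia. destruct (le_lt_dec lo hi). right; apply h; lia. left; lia.
    + apply M_and; auto. apply M_or; auto.
      destruct (le_lt_dec lo hi).
      * apply (M_ext (fun _ => False)). intro; split; intros; [tauto|]; apply H; auto. apply M_False.
      * apply (M_ext (fun _ => True)). intro; split; intros; auto; lia. apply M_True.
Qed.

Lemma P_nonneg A : M A -> 0 <= P A.
Proof. destruct HP as [_ [_ [h _]]]; apply h. Qed.
Lemma P_True : P (fun _ => True) = 1.
Proof. destruct HP as [_ [h _]]; exact h. Qed.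

Lemma P_count (A : nat -> Omega -> Prop) : (forall n, M (A n)) ->
      (forall m n w, m <> n -> A m w -> A n w -> False) ->
      infinite_sum (fun n => P (A n)) (P (fun w => exists n, A n w)).
Proof. destruct HP as [_ [_ [_ h]]]; apply h. Qed.

Lemma P_ext A B : (forall w, A w <-> B w) -> P A = P B.
Proof. intro h; rewrite (Pext A B h); auto. Qed.

Lemma P_False : P (fun _ => False) = 0.
Proof.
  pose proof (P_count (fun _ _ => False) (fun _ => M_False) (fun m n w _ h _ => h)) as H.
  set (c := P (fun _ => False)) in *.
  assert (HS : forall n, sum_f_R0 (fun _ => c) n = INR (S n) * c).
  { induction n. simpl; ring. simpl sum_f_R0. rewrite IHn. rewrite !S_INR. ring. }
  rewrite (P_ext _ (fun _ => False)) in H by (intro; split; [intros [_ h]; auto | tauto]).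
  fold c in H.
  destruct (Req_dec c 0) as [|hc]; auto.
  destruct (H (Rabs c / 2)) as [N HN]. pose proof (Rabs_pos_lt c hc); lra.
  specialize (HN (S N) ltac:(lia)). rewrite HS in HN. unfold Rdist in HN.
  replace (INR (S (S N)) * c - c) with (INR (S N) * c) in HN by (rewrite (S_INR (S N)); ring).
  rewrite Rabs_mult, Rabs_pos_eq in HN by (apply pos_INR).
  pose proof (Rabs_pos_lt c hc). assert (1 <= INR (S N)) by (apply (le_INR 1); lia). nra.
Qed.

Lemma P_add2 A B : M A -> M B -> (forall w, A w -> B w -> False) ->
  P (fun w => A w \/ B w) = P A + P B.
Proof.
  intros hA hB hd.
  set (F n := match n with O => A | 1%nat => B | _ => fun _ => False end).
  assert (hF : forall n, M (F n)). { intros [|[|n]]; simpl; auto. apply M_False. }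
  assert (hdis : forall m n w, m <> n -> F m w -> F n w -> False).
  { intros [|[|m]] [|[|n]] w hmn; simpl; try tauto; try lia; eauto. }
  pose proof (P_count F hF hdis) as H.
  assert (He : (fun w => exists n, F n w) = (fun w => A w \/ B w)).
  { apply Pext; intro w; split. intros [[|[|n]] h]; simpl in h; tauto.
    intros [h|h]. exists 0%nat; auto. exists 1%nat; auto. }
  rewrite He in H.
  apply (uniqueness_sum _ _ _ H).
  intros e he. exists 1%nat. intros n hn.
  assert (sum_f_R0 (fun n => P (F n)) n = P A + P B).
  { induction n. lia. destruct n. simpl; ring. rewrite tech5, IHn by lia. simpl. rewrite P_False. ring. }
  rewrite H0; unfold Rdist; rewrite Rminus_diag, Rabs_R0; auto.
Qed.

Lemma P_split A B : M A -> M B -> P A = P (fun w => A w /\ B w) + P (fun w => A w /\ ~ B w).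
Proof.
  intros hA hB. rewrite <- P_add2.
  - apply P_ext; intro w; tauto.
  - apply M_and; auto.
  - apply M_and; auto. apply M_not; auto.
  - intros w; tauto.
Qed.

Lemma P_mono A B : M A -> M B -> (forall w, A w -> B w) -> P A <= P B.
Proof.
  intros hA hB h. rewrite (P_split B A hB hA).
  replace (fun w => B w /\ A w) with A by (apply Pext; intro w; specialize (h w); tauto).
  pose proof (P_nonneg (fun w => B w /\ ~ A w)). assert (M (fun w => B w /\ ~ A w)).
  apply M_and; auto; apply M_not; auto. specialize (H H0); lra.
Qed.

Lemma P_le1 A : M A -> P A <= 1.
Proof. intro h; rewrite <- P_True; apply P_mono; auto. apply M_True. Qed.


Lemma P_incr (A : nat -> Omega -> Prop) : (forall n, M (A n)) ->
  (forall n w, A n w -> A (S n) w) ->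
  Un_cv (fun n => P (A n)) (P (fun w => exists n, A n w)).
Proof.
  intros hA hinc.
  assert (hmono : forall m n w, (m <= n)%nat -> A m w -> A n w).
  { intros m n w hmn; induction hmn; auto. }
  set (B n := match n with O => A O | S n' => fun w => A (S n') w /\ ~ A n' w end).
  assert (hB : forall n, M (B n)). { intros [|n]; simpl; auto. apply M_and; auto; apply M_not; auto. }
  assert (hd : forall m n w, m <> n -> B m w -> B n w -> False).
  { assert (forall m n w, (m < n)%nat -> B m w -> B n w -> False).
    { intros m [|n] w hmn h1 h2; [lia|]. simpl in h2. destruct h2 as [_ h2]. apply h2.
      apply (hmono m); [lia|]. destruct m; simpl in h1; tauto. }
    intros m n w hmn h1 h2; destruct (lt_dec m n). eauto. apply (H n m w); auto; lia. }
  pose proof (P_count B hB hd) as H.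
  assert (He : (fun w => exists n, B n w) = (fun w => exists n, A n w)).
  { apply Pext; intro w; split.
    - intros [[|n] h]; simpl in h. eauto. exists (S n); tauto.
    - intros [n h]. induction n. exists 0%nat; auto.
      destruct (classic (A n w)). auto. exists (S n); simpl; auto. }
  rewrite He in H.
  assert (hs : forall n, sum_f_R0 (fun n => P (B n)) n = P (A n)).
  { induction n. reflexivity. simpl sum_f_R0. rewrite IHn. simpl.
    rewrite (P_split (A (S n)) (A n)); auto.
    replace (fun w => A (S n) w /\ A n w) with (A n) by (apply Pext; intro w; specialize (hinc n w); tauto).
    ring. }
  intros e he. destruct (H e he) as [N HN]. exists N. intros n hn. rewrite <- hs. apply HN; auto.
Qed.

Variable X : nat -> Omega -> R.
Variable F : R -> R.
Hypothesis Hiid : iid_with_cdf M P X F.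
Hypothesis Hcont : continuity F.

Lemma M_le i x : M (fun w => X i w <= x).
Proof. apply Hiid. Qed.
Lemma M_gt i x : M (fun w => X i w > x).
Proof. apply (M_ext (fun w => ~ X i w <= x)). intro; lra. apply M_not; auto. apply M_le. Qed.
Lemma M_lt2 i m : M (fun w => X i w < X m w).
Proof.
  apply (M_ext (fun w => exists a, exists b, exists c,
     (fun w => X i w <= (INR a - INR b) / INR (S c) /\ X m w > (INR a - INR b) / INR (S c)) w)).
  - intro w; split.
    + intros [a [b [c [h1 h2]]]]; lra.
    + intro h. destruct (dense_q _ _ h) as [a [b [c hq]]]. exists a, b, c; lra.
  - do 3 (apply M_ex; auto; intro). apply M_and; auto. apply M_le. apply M_gt.
Qed.
Lemma M_record m : M (is_record X m).
Proof.
  unfold is_record. apply (M_forall_range (fun i w => X i w < X m w)). intro; apply M_lt2.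
Qed.

Lemma F_cdf x : P (fun w => X 1 w <= x) = F x.
Proof.
  destruct Hiid as [_ h]. specialize (h 1%nat (fun _ => x)). simpl in h.
  rewrite <- (P_ext (fun w => forall i, (1 <= i <= 1)%nat -> X i w <= x)). lra.
  intro w; split. intro H; apply H; lia. intros H i hi; replace i with 1%nat by lia; auto.
Qed.

Lemma F_mono x y : x <= y -> F x <= F y.
Proof. intro h; rewrite <- !F_cdf. apply P_mono; auto; try apply M_le. intros; lra. Qed.
Lemma F_range x : 0 <= F x <= 1.
Proof. rewrite <- F_cdf. split. apply P_nonneg; auto; apply M_le. apply P_le1; auto; apply M_le. Qed.

Variables J d : nat.
Definition jj := S J.
Definition kk := (S J + S d)%nat.
Definition cvec (al be ga de : R) (i : nat) : R :=
  if Nat.ltb i jj then al else if Nat.eqb i jj then be else if Nat.ltb i kk then ga else de.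
Definition Rect al be ga de (w : Omega) : Prop :=
  forall i, (1 <= i <= kk)%nat -> X i w <= cvec al be ga de i.

Lemma M_Rect al be ga de : M (Rect al be ga de).
Proof.
  unfold Rect. apply (M_ext (fun w => forall i, (1 <= i < S kk)%nat -> X i w <= cvec al be ga de i)).
  intro w; split; intros h i hi; apply h; lia.
  apply (M_forall_range (fun i w => X i w <= cvec al be ga de i)). intro; apply M_le.
Qed.

Lemma cvec_lo al be ga de i : (i < jj)%nat -> cvec al be ga de i = al.
Proof. intro h; unfold cvec. replace (Nat.ltb i jj) with true by (symmetry; apply Nat.ltb_lt; auto). auto. Qed.
Lemma cvec_j al be ga de : cvec al be ga de jj = be.
Proof. unfold cvec. rewrite Nat.ltb_irrefl, Nat.eqb_refl. auto. Qed.
Lemma cvec_mid al be ga de i : (jj < i < kk)%nat -> cvec al be ga de i = ga.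
Proof. intro h; unfold cvec.
  replace (Nat.ltb i jj) with false by (symmetry; apply Nat.ltb_ge; lia).
  replace (Nat.eqb i jj) with false by (symmetry; apply Nat.eqb_neq; lia).
  replace (Nat.ltb i kk) with true by (symmetry; apply Nat.ltb_lt; lia). auto. Qed.
Lemma cvec_k al be ga de : cvec al be ga de kk = de.
Proof. unfold cvec, jj, kk.
  replace (Nat.ltb (S J + S d) (S J)) with false by (symmetry; apply Nat.ltb_ge; lia).
  replace (Nat.eqb (S J + S d) (S J)) with false by (symmetry; apply Nat.eqb_neq; lia).
  replace (Nat.ltb (S J + S d) (S J + S d)) with false by (symmetry; apply Nat.ltb_ge; lia). auto. Qed.

Lemma P_Rect al be ga de : P (Rect al be ga de) = F al ^ J * F be * F ga ^ d * F de.
Proof.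
  destruct Hiid as [_ h]. unfold Rect; rewrite h. unfold kk.
  rewrite prodR_add. replace (S d) with (d + 1)%nat by lia. rewrite prodR_add. replace (S J) with (J + 1)%nat by lia.
  rewrite prodR_add. simpl prodR.
  rewrite (prodR_ext J _ (fun _ => F al)), prodR_const.
  rewrite (prodR_ext d _ (fun _ => F ga)), prodR_const.
  replace (J + 1 + (d + 1))%nat with kk by (unfold kk; lia).
  replace (J + 1)%nat with jj by (unfold jj; lia).
  rewrite cvec_j, cvec_k. ring.
  - intros i hi. apply f_equal, cvec_mid. unfold jj, kk; lia.
  - intros i hi. apply f_equal, cvec_lo. unfold jj; lia.
Qed.

Definition Box al be' be ga de' de (w : Omega) : Prop :=
  Rect al be ga de w /\ X jj w > be' /\ X kk w > de'.

Lemma Rect_le_j al be be' ga de w : be' <= be ->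
  (Rect al be ga de w /\ X jj w <= be') <-> Rect al be' ga de w.
Proof.
  intro hb. unfold Rect. split.
  - intros [h1 h2] i hi. destruct (Nat.eq_dec i jj).
    + subst. unfold cvec. rewrite Nat.ltb_irrefl, Nat.eqb_refl. auto.
    + specialize (h1 i hi). unfold cvec in *. destruct (Nat.ltb i jj); auto.
      replace (Nat.eqb i jj) with false in * by (symmetry; apply Nat.eqb_neq; auto). auto.
  - intro h. split.
    + intros i hi. specialize (h i hi). unfold cvec in *. destruct (Nat.ltb i jj); auto.
      destruct (Nat.eqb i jj); lra.
    + assert (hj : (1 <= jj <= kk)%nat) by (unfold jj, kk; lia). specialize (h jj hj).
      unfold cvec in h. rewrite Nat.ltb_irrefl, Nat.eqb_refl in h. auto.
Qed.

Lemma Rect_le_k al be ga de de' w : de' <= de ->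
  (Rect al be ga de w /\ X kk w <= de') <-> Rect al be ga de' w.
Proof.
  intro hb. unfold Rect.
  assert (hk : forall de0, cvec al be ga de0 kk = de0).
  { intro. unfold cvec, jj, kk.
    replace (Nat.ltb (S J + S d) (S J)) with false by (symmetry; apply Nat.ltb_ge; lia).
    replace (Nat.eqb (S J + S d) (S J)) with false by (symmetry; apply Nat.eqb_neq; lia).
    replace (Nat.ltb (S J + S d) (S J + S d)) with false by (symmetry; apply Nat.ltb_ge; lia). auto. }
  assert (hnk : forall i de0 de1, (i < kk)%nat -> cvec al be ga de0 i = cvec al be ga de1 i).
  { intros i de0 de1 hi. unfold cvec. destruct (Nat.ltb i jj); auto. destruct (Nat.eqb i jj); auto.
    replace (Nat.ltb i kk) with true by (symmetry; apply Nat.ltb_lt; auto). auto. }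
  split.
  - intros [h1 h2] i hi. destruct (Nat.eq_dec i kk).
    + subst. rewrite hk; auto.
    + rewrite (hnk i de' de) by lia. auto.
  - intro h. split.
    + intros i hi. specialize (h i hi). destruct (Nat.eq_dec i kk).
      * subst. rewrite hk in *; lra.
      * rewrite (hnk i de de') by lia. auto.
    + assert (hj : (1 <= kk <= kk)%nat) by (unfold kk; lia). specialize (h kk hj). rewrite hk in h; auto.
Qed.

Lemma M_Box al be' be ga de' de : M (Box al be' be ga de' de).
Proof. unfold Box. apply M_and; auto. apply M_Rect. apply M_and; auto; apply M_gt. Qed.

Lemma P_Rect_gt_j al be' be ga de : be' <= be ->
  P (fun w => Rect al be ga de w /\ X jj w > be') = P (Rect al be ga de) - P (Rect al be' ga de).
Proof.
  intro h. rewrite (P_split (Rect al be ga de) (fun w => X jj w <= be')); try apply M_Rect; try apply M_le.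
  rewrite (P_ext (fun w => Rect al be ga de w /\ X jj w <= be') (Rect al be' ga de)).
  rewrite (P_ext (fun w => Rect al be ga de w /\ ~ X jj w <= be') (fun w => Rect al be ga de w /\ X jj w > be')).
  ring. intro; split; intros [? ?]; split; auto; lra. intro; apply Rect_le_j; auto.
Qed.

Lemma P_Box al be' be ga de' de : be' <= be -> de' <= de ->
  P (Box al be' be ga de' de) = F al ^ J * (F be - F be') * F ga ^ d * (F de - F de').
Proof.
  intros h1 h2. unfold Box.
  assert (M1 : forall a b c e, M (fun w => Rect a b c e w /\ X jj w > be')).
  { intros; apply M_and; auto. apply M_Rect. apply M_gt. }
  transitivity (P (fun w => Rect al be ga de w /\ X jj w > be') - P (fun w => Rect al be ga de' w /\ X jj w > be')).
  - rewrite (P_split (fun w => Rect al be ga de w /\ X jj w > be') (fun w => X kk w <= de')); auto; try apply M_le.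
    rewrite (P_ext (fun w => (Rect al be ga de w /\ X jj w > be') /\ X kk w <= de')
      (fun w => Rect al be ga de' w /\ X jj w > be')).
    rewrite (P_ext (fun w => (Rect al be ga de w /\ X jj w > be') /\ ~ X kk w <= de')
      (fun w => Rect al be ga de w /\ X jj w > be' /\ X kk w > de')).
    + ring.
    + intro w; pose proof (Rect_le_k al be ga de de' w h2); split; intros;
      repeat match goal with H: _ /\ _ |- _ => destruct H end; repeat split; auto; try lra; tauto.
    + intro w; pose proof (Rect_le_k al be ga de de' w h2); split; intros;
      repeat match goal with H: _ /\ _ |- _ => destruct H end; repeat split; auto; try lra; tauto.
  - rewrite !P_Rect_gt_j, !P_Rect by auto. ring.
Qed.


Lemma sumR_ext n f g : (forall r, (r < n)%nat -> f r = g r) -> sumR n f = sumR n g.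
Proof. induction n; intro h; simpl; auto. rewrite IHn, (h n); auto. Qed.
Lemma sumR_le n f g : (forall r, (r < n)%nat -> f r <= g r) -> sumR n f <= sumR n g.
Proof. induction n; intro h; simpl. lra. pose proof (h n ltac:(lia)). assert (sumR n f <= sumR n g) by (apply IHn; auto). lra. Qed.
Lemma sumR_scal n c f : sumR n (fun r => c * f r) = c * sumR n f.
Proof. induction n; simpl. ring. rewrite IHn; ring. Qed.

Lemma chain_mono (x : nat -> R) : (forall s, x s <= x (S s)) -> forall a b, (a <= b)%nat -> x a <= x b.
Proof. intros h a b hab; induction hab. lra. specialize (h m); lra. Qed.

Definition cellev i a b (w : Omega) : Prop := a < X i w <= b.
Lemma M_cell i a b : M (cellev i a b).
Proof. unfold cellev. apply (M_ext (fun w => X i w > a /\ X i w <= b)). intro; lra. apply M_and; auto. apply M_gt. apply M_le. Qed.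

Lemma P_partition A i (x : nat -> R) : M A -> (forall s, x s <= x (S s)) -> forall t,
  P (fun w => A w /\ cellev i (x 0%nat) (x t) w) = sumR t (fun s => P (fun w => A w /\ cellev i (x s) (x (S s)) w)).
Proof.
  intros hA hx t. induction t; simpl.
  - rewrite (P_ext _ (fun _ => False)). apply P_False. unfold cellev; intro; lra.
  - rewrite <- IHt. rewrite <- P_add2.
    + apply P_ext. intro w. pose proof (chain_mono x hx 0 t ltac:(lia)). specialize (hx t). unfold cellev.
      split. intros [h1 h2]. destruct (Rle_dec (X i w) (x t)); [left|right]; split; auto; lra.
      intros [[h1 h2]|[h1 h2]]; split; auto; lra.
    + apply M_and; auto. apply M_cell.
    + apply M_and; auto. apply M_cell.
    + unfold cellev; intros w [_ h1] [_ h2]; lra.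
Qed.

Definition Ecore lo (w : Omega) : Prop := X jj w > lo /\ is_record X jj w /\ is_record X kk w.
Lemma M_Ecore lo : M (Ecore lo).
Proof. unfold Ecore. apply M_and. apply M_gt. apply M_and; apply M_record. Qed.

Lemma grid lo hi m : lo <= hi -> (1 <= m)%nat ->
  exists x : nat -> R, x 0%nat = lo /\ x m = hi /\ (forall s, x s <= x (S s)) /\
    forall r, (r <= m)%nat -> F (x r) = F lo + INR r * ((F hi - F lo) / INR m).
Proof.
  intros hlh hm. set (h := (F hi - F lo) / INR m).
  assert (hmR : 0 < INR m) by (apply lt_0_INR; lia).
  assert (hmh : INR m * h = F hi - F lo) by (unfold h; field; lra).
  assert (hh : 0 <= h). { unfold h. pose proof (F_mono lo hi hlh). apply Rmult_le_pos; [lra|]. left; apply Rinv_0_lt_compat; auto. }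
  set (pv r := F lo + INR r * h).
  assert (pv_le : forall r, (r <= m)%nat -> pv r <= F hi).
  { intros r hr. unfold pv. apply le_INR in hr. nra. }
  assert (ind : forall t, (t <= m)%nat -> exists x : nat -> R, x 0%nat = lo /\ (forall s, (s < t)%nat -> x s <= x (S s)) /\
           (forall r, (r <= t)%nat -> F (x r) = pv r) /\ (forall r, (r <= t)%nat -> x r <= hi)).
  { induction t; intro ht.
    - exists (fun _ => lo). split; auto. split. intros; lia. split; intros r hr; replace r with 0%nat by lia.
      unfold pv; simpl; ring. auto.
    - destruct (IHt ltac:(lia)) as [x [h0 [h1 [h2 h3]]]].
      destruct (IVT_cor (fun z => F z - pv (S t)) (x t) hi) as [z [hz1 hz2]].
      + apply continuity_minus; auto. apply continuity_const. intros a b; auto.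
      + apply h3; lia.
      + rewrite h2 by lia. pose proof (pv_le (S t) ht). assert (pv t <= pv (S t)) by (unfold pv; rewrite S_INR; nra). nra.
      + exists (fun r => if Nat.eqb r (S t) then z else x r). split; [simpl; auto|]. split; [|split].
        * intros s hs. destruct (Nat.eqb s (S t)) eqn:E1; [apply Nat.eqb_eq in E1; lia|].
          destruct (Nat.eqb (S s) (S t)) eqn:E2. apply Nat.eqb_eq in E2. replace s with t by lia. lra. apply h1; apply Nat.eqb_neq in E2; lia.
        * intros r hr. destruct (Nat.eqb r (S t)) eqn:E1. apply Nat.eqb_eq in E1; subst; lra. apply Nat.eqb_neq in E1; apply h2; lia.
        * intros r hr. destruct (Nat.eqb r (S t)) eqn:E1. lra. apply Nat.eqb_neq in E1; apply h3; lia. }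
  destruct (ind m (le_n m)) as [x [h0 [h1 [h2 h3]]]].
  exists (fun r => if Nat.ltb r m then x r else hi). split; [|split; [|split]].
  - replace (Nat.ltb 0 m) with true by (symmetry; apply Nat.ltb_lt; lia). auto.
  - rewrite Nat.ltb_irrefl; auto.
  - intro s. destruct (lt_dec (S s) m).
    + rewrite (proj2 (Nat.ltb_lt s m)), (proj2 (Nat.ltb_lt (S s) m)) by lia. apply h1; lia.
    + rewrite (proj2 (Nat.ltb_ge (S s) m)) by lia. destruct (lt_dec s m).
      * rewrite (proj2 (Nat.ltb_lt s m)) by lia. apply h3; lia.
      * rewrite (proj2 (Nat.ltb_ge s m)) by lia. lra.
  - intros r hr. destruct (Nat.ltb r m) eqn:E1. apply h2; lia. apply Nat.ltb_ge in E1. replace r with m by lia.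
    fold pv. unfold pv. fold h. lra.
Qed.

Lemma jj_kk : (1 <= jj < kk)%nat.
Proof. unfold jj, kk; lia. Qed.

Lemma incl_up lo a1 b1 a2 b2 w : Ecore lo w -> cellev kk a2 b2 w -> cellev jj a1 b1 w ->
  Box b1 a1 b1 b2 a2 b2 w.
Proof.
  intros [h0 [hrj hrk]] [hk1 hk2] [hj1 hj2]. unfold Box, Rect. split; [|split; auto].
  intros i hi. destruct (lt_dec i jj).
  - rewrite cvec_lo by auto. specialize (hrj i ltac:(lia)). lra.
  - destruct (Nat.eq_dec i jj). subst; rewrite cvec_j; auto.
    destruct (Nat.eq_dec i kk). subst; rewrite cvec_k; auto.
    rewrite cvec_mid by lia. specialize (hrk i ltac:(lia)). lra.
Qed.

Lemma incl_low lo a1 b1 a2 b2 w : lo <= a1 -> b1 <= a2 -> Box a1 a1 b1 a2 a2 b2 w ->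
  (Ecore lo w /\ cellev kk a2 b2 w) /\ cellev jj a1 b1 w.
Proof.
  intros hl hb [hR [hj hk]]. unfold Rect in hR. pose proof jj_kk.
  assert (hj2 : X jj w <= b1) by (pose proof (hR jj ltac:(lia)); rewrite cvec_j in H0; auto).
  assert (hk2 : X kk w <= b2) by (pose proof (hR kk ltac:(lia)); rewrite cvec_k in H0; auto).
  assert (hlo : forall i, (1 <= i < jj)%nat -> X i w <= a1).
  { intros i hi. pose proof (hR i ltac:(lia)). rewrite cvec_lo in H0 by lia; auto. }
  assert (hmid : forall i, (jj < i < kk)%nat -> X i w <= a2).
  { intros i hi. pose proof (hR i ltac:(lia)). rewrite cvec_mid in H0 by lia; auto. }
  unfold Ecore, cellev, is_record. split; [split; [split; [lra|split]|]|]; try lra.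
  - intros i hi. pose proof (hlo i hi). lra.
  - intros i hi. destruct (lt_dec i jj). pose proof (hlo i ltac:(lia)). lra.
    destruct (Nat.eq_dec i jj). subst; lra. pose proof (hmid i ltac:(lia)). lra.
Qed.

Lemma Ecore_kk lo w : Ecore lo w -> X kk w > X jj w /\ X jj w > lo.
Proof. intros [h0 [_ h]]. split; auto. apply h. apply jj_kk. Qed.

Lemma small_zero a : (forall m, (1 <= m)%nat -> Rabs a <= 3 / INR m) -> a = 0.
Proof.
  intro h. destruct (Req_dec a 0); auto. exfalso.
  pose proof (Rabs_pos_lt a H).
  destruct (archimed_cor1 (Rabs a / 3)) as [N [hN hN0]]; [lra|].
  specialize (h N ltac:(lia)). assert (0 < INR N) by (apply lt_0_INR; lia).
  assert (3 / INR N < Rabs a). { unfold Rdiv. replace (Rabs a) with (3 * (Rabs a / 3)) by field. apply Rmult_lt_compat_l; lra. }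
  lra.
Qed.

Lemma P_E lo hi : lo < hi -> P (fun w => Ecore lo w /\ X kk w <= hi) = Df J d (F lo) (F hi).
Proof.
  intro hlh. apply Rminus_diag_uniq, small_zero. intros m hm.
  destruct (grid lo hi m ltac:(lra) hm) as [x [hx0 [hxm [hxc hxF]]]].
  set (U := F lo). set (h := (F hi - F lo) / INR m).
  assert (hmR : 0 < INR m) by (apply lt_0_INR; lia).
  assert (HU : 0 <= U) by apply F_range.
  assert (Hh : 0 <= h). { unfold h. pose proof (F_mono lo hi ltac:(lra)). apply Rmult_le_pos; [lra|]. left; apply Rinv_0_lt_compat; auto. }
  assert (hpp : forall r, (r <= m)%nat -> F (x r) = pp U h r). { intros r hr; rewrite hxF; auto. }
  assert (hppm : pp U h m = F hi). { rewrite <- hpp, hxm; auto. }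
  assert (Hm1 : pp U h m <= 1). { rewrite hppm; apply F_range. }
  assert (hmh : INR m * h = F hi - F lo) by (unfold h; field; lra).
  set (T s := P (fun w => Ecore lo w /\ cellev kk (x s) (x (S s)) w)).
  assert (hME : forall a b, M (fun w => Ecore lo w /\ cellev kk a b w)).
  { intros; apply M_and. apply M_Ecore. apply M_cell. }
  assert (E1 : P (fun w => Ecore lo w /\ X kk w <= hi) = sumR m T).
  { unfold T. rewrite <- P_partition; auto. apply P_ext. intro w. unfold cellev. rewrite hx0, hxm.
    split. intros [h1 h2]. pose proof (Ecore_kk lo w h1). split; auto; lra. intros [h1 [h2 h3]]; auto. apply M_Ecore. }
  assert (Tup : forall s, (s < m)%nat -> T s <= h * (pp U h (S s) ^ d * Up J U h (S s))).
  { intros s hs. unfold T.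
    rewrite (P_ext _ (fun w => (Ecore lo w /\ cellev kk (x s) (x (S s)) w) /\ cellev jj (x 0%nat) (x (S s)) w)).
    2:{ intro w. split; [|tauto]. intros [h1 h2]. split; auto. pose proof (Ecore_kk lo w h1). unfold cellev in *. rewrite hx0; lra. }
    rewrite P_partition; auto.
    unfold Up. rewrite <- sumR_scal, <- sumR_scal. apply sumR_le. intros r hr.
    apply Rle_trans with (P (Box (x (S r)) (x r) (x (S r)) (x (S s)) (x s) (x (S s)))).
    - apply P_mono. apply M_and; auto. apply M_cell. apply M_Box. intros w [[h1 h2] h3]. apply (incl_up lo); auto.
    - rewrite P_Box by auto. rewrite !hpp by lia. rewrite pp_S, pp_S. right; ring. }
  assert (Tlow : forall s, (s < m)%nat -> h * (pp U h s ^ d * Lw J U h s) <= T s).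
  { intros s hs. unfold T.
    apply Rle_trans with (P (fun w => (Ecore lo w /\ cellev kk (x s) (x (S s)) w) /\ cellev jj (x 0%nat) (x s) w)).
    2:{ apply P_mono. apply M_and; auto. apply M_cell. auto. tauto. }
    rewrite P_partition; auto.
    unfold Lw. rewrite <- sumR_scal, <- sumR_scal. apply sumR_le. intros r hr.
    apply Rle_trans with (P (Box (x r) (x r) (x (S r)) (x s) (x s) (x (S s)))).
    - rewrite P_Box by auto. rewrite !hpp by lia. rewrite pp_S, pp_S. right; ring.
    - apply P_mono. apply M_Box. apply M_and; auto. apply M_cell. intros w hw. apply (incl_low lo); auto.
      rewrite <- hx0; apply chain_mono; auto; lia. apply chain_mono; auto; lia. }
  pose proof (D_bounds J d U h HU Hh m) as DB.
  pose proof (gap J d U h HU Hh m Hm1 m (le_n m)) as GP.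
  assert (LB : lowerS J d U h m <= sumR m T). { apply sumR_le. intros; apply Tlow; auto. }
  assert (UB : sumR m T <= upperS J d U h m). { apply sumR_le. intros; apply Tup; auto. }
  rewrite E1. rewrite <- hppm. fold U.
  assert (hpd : pp U h m ^ d - pp U h 0 ^ d <= 1).
  { assert (pp0 : pp U h 0 = U) by (unfold pp; simpl; ring). rewrite pp0.
    pose proof (pp_ge U h Hh m). pose proof (pow_le_1 (pp U h m) d ltac:(lra)). pose proof (pow_le U d HU). lra. }
  assert (h <= 1 / INR m). { unfold h. unfold Rdiv. apply Rmult_le_compat_r. left; apply Rinv_0_lt_compat; auto. pose proof (F_range hi); pose proof (F_range lo); lra. }
  assert (2 * INR m * h * h <= 2 * h). { assert (INR m * h <= 1) by (rewrite hmh; pose proof (F_range hi); pose proof (F_range lo); lra). nra. }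
  apply Rabs_le. split.
  - assert (h * (pp U h m ^ d - pp U h 0 ^ d) <= h) by nra.
    assert (3 * h <= 3 / INR m) by (unfold Rdiv in *; lra). lra.
  - assert (h * (pp U h m ^ d - pp U h 0 ^ d) <= h) by nra.
    assert (3 * h <= 3 / INR m) by (unfold Rdiv in *; lra). lra.
Qed.

Lemma nat_above v : exists N : nat, v <= INR N.
Proof. destruct (INR_archimed 1 v) as [N hN]; [lra|]. exists N; lra. Qed.

Lemma P_Ecore lo : P (Ecore lo) = Df J d (F lo) 1.
Proof.
  set (t N := lo + 1 + INR N).
  assert (ht : forall N, lo < t N) by (intro N; unfold t; pose proof (pos_INR N); lra).
  assert (htS : forall N, t N <= t (S N)) by (intro N; unfold t; rewrite S_INR; lra).
  assert (Ftl : Un_cv (fun N => F (t N)) 1).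
  { rewrite <- P_True. rewrite <- (P_ext (fun w => exists N, X 1 w <= t N)).
    - apply (Un_cv_ext (fun N => P (fun w => X 1 w <= t N))). intro; apply F_cdf.
      apply P_incr. intro; apply M_le. intros N w hw; specialize (htS N); lra.
    - intro w; split; auto. intros _. destruct (nat_above (X 1 w - lo)) as [N hN]. exists N; unfold t; lra. }
  assert (cont : continuity_pt (Df J d (F lo)) 1).
  { apply derivable_continuous_pt. exists (1 ^ d * Gf J (F lo) 1). apply Df_deriv. }
  pose proof (continuity_seq _ _ _ cont Ftl) as C1.
  assert (C2 : Un_cv (fun N => P (fun w => Ecore lo w /\ X kk w <= t N)) (P (Ecore lo))).
  { rewrite <- (P_ext (fun w => exists N, Ecore lo w /\ X kk w <= t N)).
    - apply P_incr. intro; apply M_and. apply M_Ecore. apply M_le. intros N w [h1 h2]; specialize (htS N); split; auto; lra.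
    - intro w; split. intros [N [h _]]; auto. intros h. destruct (nat_above (X kk w - lo)) as [N hN]. exists N; split; auto; unfold t; lra. }
  apply (UL_sequence _ _ _ C2). apply (Un_cv_ext (fun N => Df J d (F lo) (F (t N)))); auto.
  intro N. symmetry; apply P_E; auto.
Qed.
End Main.

Lemma cpt_of_deriv f x l : derivable_pt_lim f x l -> continuity_pt f x.
Proof. intro h. apply derivable_continuous_pt. exists l; auto. Qed.

Lemma cv_evt (a b : nat -> R) l N0 : (forall n, (N0 <= n)%nat -> a n = b n) -> Un_cv b l -> Un_cv a l.
Proof.
  intros he hb e he'. destruct (hb e he') as [N hN]. exists (max N N0). intros n hn.
  rewrite he by lia. apply hN; lia.
Qed.

Lemma cv_ge0 (a : nat -> R) l : (forall n, 0 <= a n) -> Un_cv a l -> 0 <= l.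
Proof.
  intros h hc. destruct (Rle_dec 0 l); auto. exfalso.
  destruct (hc (- l)) as [N hN]. lra. specialize (hN N (le_n N)). specialize (h N).
  unfold Rdist in hN. apply Rabs_def2 in hN. lra.
Qed.
Lemma cv_le1 (a : nat -> R) l : (forall n, a n <= 1) -> Un_cv a l -> l <= 1.
Proof.
  intros h hc. destruct (Rle_dec l 1); auto. exfalso.
  destruct (hc (l - 1)) as [N hN]. lra. specialize (hN N (le_n N)). specialize (h N).
  unfold Rdist in hN. apply Rabs_def2 in hN. lra.
Qed.

Lemma cv_div a b la lb : Un_cv a la -> Un_cv b lb -> lb <> 0 -> Un_cv (fun n => a n / b n) (la / lb).
Proof.
  intros ha hb hne. unfold Rdiv. apply CV_mult; auto.
  assert (c : continuity_pt (fun x => / x) lb).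
  { pose proof (continuity_pt_inv id lb (cpt_of_deriv _ _ _ (derivable_pt_lim_id lb)) hne). exact H. }
  apply (continuity_seq (fun x => / x)); auto.
Qed.

Lemma pow_anti c a b : 0 <= c <= 1 -> (b <= a)%nat -> c ^ a <= c ^ b.
Proof.
  intros hc hab. replace a with (b + (a - b))%nat by lia. rewrite pow_add.
  pose proof (pow_le c b (proj1 hc)). pose proof (pow_le_1 c (a - b) hc). nra.
Qed.

Lemma exp_pow c e : 0 < c -> c ^ e = exp (INR e * ln c).
Proof. intro h. rewrite <- Rpower_pow by auto. reflexivity. Qed.

Lemma cv_pow_rate (c : nat -> R) (e : nat -> nat) g lam :
  (forall n, 0 <= c n <= 1) -> Un_cv (fun n => c n ^ n) g ->
  Un_cv (fun n => INR (e n) / INR n) lam -> 0 < lam ->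
  Un_cv (fun n => c n ^ e n) (rpow g lam).
Proof.
  intros hc hg he hlam.
  assert (g0 : 0 <= g) by (apply (cv_ge0 _ _ (fun n => pow_le _ _ (proj1 (hc n))) hg)).
  unfold rpow. destruct (Rlt_dec 0 g) as [gp|gn].
  -
    destruct (hg (g / 2)) as [N1 hN1]. lra.
    assert (cpos : forall n, (max N1 1 <= n)%nat -> 0 < c n).
    { intros n hn. specialize (hN1 n ltac:(lia)). unfold Rdist in hN1. apply Rabs_def2 in hN1.
      destruct (proj1 (hc n)) as [|h0]; auto. rewrite <- h0 in hN1. rewrite pow_i in hN1 by lia. lra. }
    apply (cv_evt _ (fun n => exp ((INR (e n) / INR n) * ln (c n ^ n))) _ (max N1 1)).
    + intros n hn. rewrite exp_pow by auto. f_equal. rewrite ln_pow by auto. field.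
      apply not_0_INR; lia.
    + unfold Rpower. apply (continuity_seq exp). apply (cpt_of_deriv _ _ _ (derivable_pt_lim_exp _)).
      apply CV_mult; auto. apply (continuity_seq ln). apply (cpt_of_deriv _ _ _ (derivable_pt_lim_ln _ gp)). auto.
  - assert (g = 0) by lra. subst g.
    destruct (INR_archimed (lam / 2) 1) as [K hK]. lra.
    assert (hK1 : (1 <= K)%nat). { destruct K. simpl in hK. lra. lia. }
    destruct (he (lam / 2)) as [N2 hN2]. lra.
    intros eps heps. set (ep := Rmin eps 1).
    assert (hep : 0 < ep <= 1) by (unfold ep; apply Rmin_case_strong; intros; lra).
    destruct (hg (ep ^ K)) as [N3 hN3]. apply pow_lt; lra.
    exists (max (max N2 N3) 1). intros n hn.
    specialize (hN2 n ltac:(lia)). specialize (hN3 n ltac:(lia)).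
    unfold Rdist in *. rewrite Rminus_0_r in *. apply Rabs_def2 in hN2.
    rewrite Rabs_pos_eq in hN3 by (apply pow_le; apply hc).
    rewrite Rabs_pos_eq by (apply pow_le; apply hc).
    assert (hn0 : 0 < INR n) by (apply lt_0_INR; lia).
    assert (hKe : (n <= e n * K)%nat).
    { apply INR_le. rewrite mult_INR.
      assert (INR (e n) > lam / 2 * INR n).
      { apply (Rmult_lt_reg_r (/ INR n)). apply Rinv_0_lt_compat; auto. 
        replace (lam / 2 * INR n * / INR n) with (lam / 2) by (field; lra). unfold Rdiv in hN2; lra. }
      pose proof (pos_INR K). nra. }
    assert (h1 : (c n ^ e n) ^ K <= c n ^ n). { rewrite <- pow_mult. apply pow_anti; auto. }
    assert (c n ^ e n < ep).
    { destruct (Rlt_le_dec (c n ^ e n) ep) as [|hge]; auto.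
      assert (ep ^ K <= (c n ^ e n) ^ K) by (apply pow_incr; lra). lra. }
    unfold ep in *. pose proof (Rmin_l eps 1). lra.
Qed.

Lemma dexpl l t : derivable_pt_lim (fun t => exp (- l * t)) t (exp (- l * t) * - l).
Proof.
  pose proof (derivable_pt_lim_scal id (- l) t 1 (derivable_pt_lim_id t)) as H1.
  replace (- l * 1) with (- l) in H1 by ring.
  exact (derivable_pt_lim_comp (fun t => - l * t) exp t (- l) (exp (- l * t)) H1 (derivable_pt_lim_exp _)).
Qed.

Lemma den_pos g l1 l2 : 0 <= g < 1 -> 0 < l1 -> l1 < l2 ->
  0 < l2 / (l2 - l1) * (1 - rpow g l1) - l1 / (l2 - l1) * (1 - rpow g l2).
Proof.
  intros hg h1 h12.
  replace (l2 / (l2 - l1) * (1 - rpow g l1) - l1 / (l2 - l1) * (1 - rpow g l2))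
    with ((l2 * (1 - rpow g l1) - l1 * (1 - rpow g l2)) / (l2 - l1)) by (field; lra).
  apply Rdiv_lt_0_compat; [|lra].
  unfold rpow. destruct (Rlt_dec 0 g) as [gp|gn]; [|lra].
  unfold Rpower. set (s := - ln g).
  assert (hs : 0 < s). { unfold s. assert (ln g < ln 1) by (apply ln_increasing; lra). rewrite ln_1 in H. lra. }
  replace (l1 * ln g) with (- l1 * s) by (unfold s; ring).
  replace (l2 * ln g) with (- l2 * s) by (unfold s; ring).
  set (phi t := l2 * (1 - exp (- l1 * t)) - l1 * (1 - exp (- l2 * t))).
  destruct (MVT_cor2 phi (fun t => l2 * (- (exp (- l1 * t) * - l1)) - l1 * (- (exp (- l2 * t) * - l2))) 0 s hs)
    as [c [hc1 hc2]].
  - intros c hc. unfold phi. apply dsub; apply (dext _ _ _ _ (eq_refl _)).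
    + replace (l2 * - (exp (- l1 * c) * - l1)) with (0 * (1 - exp (- l1 * c)) + l2 * (0 - exp (- l1 * c) * - l1)) by ring.
      apply (dmul (fun _ => l2) (fun t => 1 - exp (- l1 * t))). apply dconst. apply dsub. apply dconst. apply dexpl.
    + replace (l1 * - (exp (- l2 * c) * - l2)) with (0 * (1 - exp (- l2 * c)) + l1 * (0 - exp (- l2 * c) * - l2)) by ring.
      apply (dmul (fun _ => l1) (fun t => 1 - exp (- l2 * t))). apply dconst. apply dsub. apply dconst. apply dexpl.
  - assert (phi 0 = 0) by (unfold phi; rewrite !Rmult_0_r, exp_0; ring).
    destruct hc2 as [hc2 hc3]. assert (exp (- l2 * c) < exp (- l1 * c)) by (apply exp_increasing; nra).
    assert (0 < l1 * l2) by nra.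
    fold (phi s). assert (0 < (l1 * l2) * (exp (- l1 * c) - exp (- l2 * c)) * (s - 0)).
    { apply Rmult_lt_0_compat; [apply Rmult_lt_0_compat|]; lra. }
    replace (l2 * - (exp (- l1 * c) * - l1) - l1 * - (exp (- l2 * c) * - l2)) with ((l1 * l2) * (exp (- l1 * c) - exp (- l2 * c))) in hc1 by ring.
    lra.
Qed.

Lemma Df_closed J d U V : Df J d U V * (INR (S J) * INR (S J + S d)) =
  V ^ (S J + S d) - U ^ S J * (INR (S J + S d) / INR (S d) * V ^ S d - INR (S J) / INR (S d) * U ^ S d).
Proof.
  unfold Df, Gf. rewrite !pow_add. rewrite plus_INR.
  assert (INR (S J) <> 0) by (apply not_0_INR; lia).
  assert (INR (S d) <> 0) by (apply not_0_INR; lia).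
  assert (INR (S J) + INR (S d) <> 0) by (rewrite <- plus_INR; apply not_0_INR; lia).
  field. auto.
Qed.

Lemma ratio_eq (nu du NN DD c : R) : c <> 0 -> nu * c = NN -> du * c = DD -> nu / du = NN / DD.
Proof.
  intros hc h1 h2. destruct (Req_dec DD 0) as [h0|h0].
  - rewrite h0 in *. assert (du = 0) by (destruct (Rmult_integral _ _ h2); auto; contradiction).
    subst du. unfold Rdiv. rewrite !Rinv_0. ring.
  - subst. field. split; auto. intro; subst; apply h0; ring.
Qed.

Lemma div_le_iff a x b y : 0 < a -> ((x - b) / a <= y <-> x <= a * y + b).
Proof. intro ha. assert (x - b = (x - b) / a * a) by (field; lra). split; intro; nra. Qed.
Lemma div_gt_iff a x b u : 0 < a -> ((x - b) / a > u <-> x > a * u + b).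
Proof. intro ha. assert (x - b = (x - b) / a * a) by (field; lra). split; intro; nra. Qed.

Theorem mainTheorem11
  (Omega : Type) (M : (Omega -> Prop) -> Prop) (P : (Omega -> Prop) -> R)
  (X : nat -> Omega -> R) (F G : R -> R) (a b : nat -> R)
  (j k : nat -> nat) (lam1 lam2 u y : R)
  (HP : is_probability M P)
  (Hiid : iid_with_cdf M P X F)
  (Hcont : continuity F)
  (Hdom : in_domain_of_attraction F G a b)
  (Hlam1 : 0 < lam1) (Hlam12 : lam1 < lam2)
  (Hj : Un_cv (fun n => INR (j n) / INR n) lam1)
  (Hk : Un_cv (fun n => INR (k n) / INR n) lam2)
  (Huy : u < y) (HGu : G u < 1) :
  let beta1 := lam1 / (lam2 - lam1) in
  let beta2 := lam2 / (lam2 - lam1) in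
  Un_cv
    (fun n =>
       P (fun w => (X (k n) w - b n) / a n <= y /\
                   (X (j n) w - b n) / a n > u /\
                   is_record X (j n) w /\ is_record X (k n) w)
       / P (fun w => (X (j n) w - b n) / a n > u /\
                     is_record X (j n) w /\ is_record X (k n) w))
    ((rpow (G y) lam2
      - rpow (G u) lam1 * (beta2 * rpow (G y) (lam2 - lam1)
                           - beta1 * rpow (G u) (lam2 - lam1)))
     / (beta2 * (1 - rpow (G u) lam1) - beta1 * (1 - rpow (G u) lam2))).
Proof.
  intros beta1 beta2.
  destruct Hdom as [_ [Ha Hconv]].
  set (c n := F (a n * u + b n)). set (v n := F (a n * y + b n)).
  assert (hc : forall n, 0 <= c n <= 1) by (intro; apply (F_range _ _ _ HP X F Hiid)).
  assert (hv : forall n, 0 <= v n <= 1) by (intro; apply (F_range _ _ _ HP X F Hiid)).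
  assert (Hcu := Hconv u). assert (Hcy := Hconv y). fold c in Hcu. fold v in Hcy.
  assert (Gu0 : 0 <= G u) by (apply (cv_ge0 _ _ (fun n => pow_le _ _ (proj1 (hc n))) Hcu)).
  pose proof (CV_minus _ _ _ _ Hk Hj) as Hkj.
  destruct (Hj (lam1 / 2)) as [N1 hN1]. lra.
  destruct (Hkj ((lam2 - lam1) / 2)) as [N2 hN2]. lra.
  set (N0 := max (max N1 N2) 1).
  assert (hidx : forall n, (N0 <= n)%nat -> (1 <= j n)%nat /\ (j n < k n)%nat).
  { intros n hn. specialize (hN1 n ltac:(unfold N0 in *; lia)). specialize (hN2 n ltac:(unfold N0 in *; lia)).
    unfold Rdist in *. apply Rabs_def2 in hN1. apply Rabs_def2 in hN2.
    assert (hn0 : 0 < INR n) by (apply lt_0_INR; unfold N0 in *; lia).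
    split.
    - destruct (j n) eqn:E. simpl in hN1. unfold Rdiv in hN1. rewrite Rmult_0_l in hN1. lra. lia.
    - apply INR_lt. apply (Rmult_lt_reg_r (/ INR n)). apply Rinv_0_lt_compat; auto. unfold Rdiv in hN2. lra. }
  set (e n := (k n - j n)%nat).
  assert (hn0 : forall n, (N0 <= n)%nat -> INR n <> 0) by (intros n hn; apply not_0_INR; unfold N0 in *; lia).
  assert (he0 : forall n, (N0 <= n)%nat -> INR (e n) <> 0) by (intros n hn; apply not_0_INR; pose proof (hidx n hn); unfold e; lia).
  assert (He : Un_cv (fun n => INR (e n) / INR n) (lam2 - lam1)).
  { apply (cv_evt _ (fun n => INR (k n) / INR n - INR (j n) / INR n) _ N0); [|exact Hkj]. intros n hn. destruct (hidx n hn).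
    unfold e; rewrite minus_INR by lia. field. auto. }
  assert (cj := cv_pow_rate c j (G u) lam1 hc Hcu Hj Hlam1).
  assert (ck := cv_pow_rate c k (G u) lam2 hc Hcu Hk ltac:(lra)).
  assert (ce := cv_pow_rate c e (G u) (lam2 - lam1) hc Hcu He ltac:(lra)).
  assert (vk := cv_pow_rate v k (G y) lam2 hv Hcy Hk ltac:(lra)).
  assert (ve := cv_pow_rate v e (G y) (lam2 - lam1) hv Hcy He ltac:(lra)).
  assert (b1 : Un_cv (fun n => INR (j n) / INR (e n)) beta1).
  { apply (cv_evt _ (fun n => (INR (j n) / INR n) / (INR (e n) / INR n)) _ N0).
    intros n hn. field. split; auto. apply cv_div; auto. lra. }
  assert (b2 : Un_cv (fun n => INR (k n) / INR (e n)) beta2).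
  { apply (cv_evt _ (fun n => (INR (k n) / INR n) / (INR (e n) / INR n)) _ N0).
    intros n hn. field. split; auto. apply cv_div; auto. lra. }
  assert (one : Un_cv (fun _ => 1) 1). { intros eps heps; exists 0%nat; intros; unfold Rdist; rewrite Rminus_diag, Rabs_R0; lra. }
  set (NN n := v n ^ k n - c n ^ j n * (INR (k n) / INR (e n) * v n ^ e n - INR (j n) / INR (e n) * c n ^ e n)).
  set (DD n := INR (k n) / INR (e n) * (1 - c n ^ j n) - INR (j n) / INR (e n) * (1 - c n ^ k n)).
  assert (cN : Un_cv NN (rpow (G y) lam2 - rpow (G u) lam1 * (beta2 * rpow (G y) (lam2 - lam1) - beta1 * rpow (G u) (lam2 - lam1)))).
  { unfold NN. apply CV_minus; auto. apply CV_mult; auto. apply CV_minus; apply CV_mult; auto. }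
  assert (cD : Un_cv DD (beta2 * (1 - rpow (G u) lam1) - beta1 * (1 - rpow (G u) lam2))).
  { unfold DD. apply CV_minus; apply CV_mult; auto; apply CV_minus; auto. }
  assert (Dpos := den_pos (G u) lam1 lam2 ltac:(lra) Hlam1 Hlam12). fold beta1 beta2 in Dpos.
  apply (cv_evt _ (fun n => NN n / DD n) _ N0); [|apply cv_div; auto; lra].
  intros n hn. destruct (hidx n hn) as [hj1 hjk].
  set (J := pred (j n)). set (d := pred (e n)).
  assert (Ej : j n = S J) by (unfold J; lia).
  assert (Ee : e n = S d) by (unfold d, e in *; lia).
  assert (Ek : k n = (S J + S d)%nat) by (unfold e in Ee; lia).
  set (lo := a n * u + b n). set (hi := a n * y + b n).
  assert (hlh : lo < hi) by (unfold lo, hi; pose proof (Ha n); nra).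
  assert (num : P (fun w => (X (k n) w - b n) / a n <= y /\ (X (j n) w - b n) / a n > u /\
                   is_record X (j n) w /\ is_record X (k n) w) = Df J d (c n) (v n)).
  { unfold c, v. fold lo hi. rewrite <- (P_E _ _ _ HP X F Hiid Hcont J d lo hi hlh).
    apply P_ext. intro w. unfold Ecore, jj, kk. rewrite <- Ek, <- Ej.
    rewrite (div_le_iff _ _ _ _ (Ha n)), (div_gt_iff _ _ _ _ (Ha n)). fold lo hi. tauto. }
  assert (den : P (fun w => (X (j n) w - b n) / a n > u /\ is_record X (j n) w /\ is_record X (k n) w) = Df J d (c n) 1).
  { unfold c. fold lo. rewrite <- (P_Ecore _ _ _ HP X F Hiid Hcont J d lo). apply P_ext. intro w.
    unfold Ecore, jj, kk. rewrite <- Ek, <- Ej. rewrite (div_gt_iff _ _ _ _ (Ha n)). fold lo. tauto. }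
  cbv beta. rewrite num, den.
  assert (dS : INR (S d) <> 0) by (apply not_0_INR; lia).
  apply (ratio_eq _ _ _ _ (INR (S J) * INR (S J + S d))).
  - apply Rmult_integral_contrapositive; split; apply not_0_INR; lia.
  - rewrite Df_closed. unfold NN. rewrite Ek, Ej, Ee. reflexivity.
  - rewrite Df_closed. unfold DD. rewrite Ek, Ej, Ee. rewrite !pow1, pow_add, plus_INR. field. auto.
Qed.
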